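(* Consider Algorithm 1 (delay-tolerant integer flow balancing, described in the context) run on a strongly connected digraph $\mathcal{G}_d$ with edge bounds $l_{ji},u_{ji}$, under any realization of transmission delays bounded by $\overline{\tau}<\infty$. Let $\mathcal{V}^-[k]=\{v_j\in\mathcal{V}: b_j[k]<0\}$. Then for every $k\ge 0$, $\mathcal{V}^-[k+1]\subseteq\mathcal{V}^-[k]$.
   Context: Setting: $\mathcal{G}_d=(\mathcal{V},\mathcal{E})$ is a strongly connected digraph, $\mathcal{V}=\{v_1,\dots,v_n\}$, $n\ge2$; an edge $(v_j,v_i)$ carries flow from $v_i$ to $v_j$. $\mathcal{N}_j^-=\{v_i:(v_j,v_i)\in\mathcal{E}\}$, $\mathcal{N}_j^+=\{v_l:(v_l,v_j)\in\mathcal{E}\}$, $\mathcal{D}_j=|\mathcal{N}_j^-|+|\mathcal{N}_j^+|$. Each edge has real bounds $1\le l_{ji}\le u_{ji}$. Communication is bidirectional along every edge. Projection: $[x]_{ji}=\max\{\lceil l_{ji}\rceil,\min\{\lfloor u_{ji}\rfloor,x\}\}$. State: for each edge $(v_l,v_j)$, the tail $v_j$ holds the actual flow $f_{lj}[k]$; for each edge $(v_j,v_i)$, the head $v_j$ holds a perceived flow $f^{(p)}_{ji}[k]$. Actual balance $b_j[k]=\sum_{v_i\in\mathcal{N}_j^-}f_{ji}[k]-\sum_{v_l\in\mathcal{N}_j^+}f_{lj}[k]$; perceived balance $b^{(p)}_j[k]=\sum_{v_i\in\mathcal{N}_j^-}f^{(p)}_{ji}[k]-\sum_{v_l\in\mathcal{N}_j^+}f_{lj}[k]$;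 total imbalance $\varepsilon[k]=\sum_j|b_j[k]|$. Algorithm 1. Initialization: $f_{ji}[0]=f^{(p)}_{ji}[0]=\lceil l_{ji}\rceil$ for all edges; each $v_j$ fixes a cyclic order of its $\mathcal{D}_j$ incident (incoming and outgoing) edges and a pointer into it. Iteration $k=0,1,2,\dots$, at each node $v_j$: (1) compute $b^{(p)}_j[k]$. (2) If $b^{(p)}_j[k]>0$, starting at the pointer and cycling through the order, visit edges one at a time: at an outgoing edge $(v_l,v_j)$, if $f_{lj}[k]+c^{(j)}_{lj}[k]<\lfloor u_{lj}\rfloor$ add $1$ to $c^{(j)}_{lj}[k]$; at an incoming edge $(v_j,v_i)$, if $f^{(p)}_{ji}[k]+c^{(j)}_{ji}[k]>\lceil l_{ji}\rceil$ subtract $1$ from $c^{(j)}_{ji}[k]$ (the $c$'s start at $0$; edges at their limit are skipped); stop as soon as the total number of unit changes equals $b^{(p)}_j[k]$, leaving the pointer at the next edge. If $b^{(p)}_j[k]\le 0$, all $c^{(j)}[k]=0$. (3) $v_j$ transmits $c^{(j)}_{lj}[k]$ to each out-neighbor $v_l$ and $c^{(j)}_{ji}[k]$ to each in-neighbor $v_i$. A message sent at step $k$ over a link in a given direction is delivered at step $k+\tau$, where the integer $\tau\in[0,\overline{\tau}]$ is arbitrary (unknown, time-varying, independent across links and directions). (4) $v_j$ forms $\overline{c}^{(l)}_{lj}[k]$ (resp. $\overline{c}^{(i)}_{ji}[k]$) as the sum of all values $c^{(l)}_{lj}[k_0]$ (resp. $c^{(i)}_{ji}[k_0]$) sent by $v_l$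 (resp. $v_i$) that are delivered at step $k$ (zero if none). (5)–(6) $f_{lj}[k+1]=[f_{lj}[k]+c^{(j)}_{lj}[k]+\overline{c}^{(l)}_{lj}[k]]_{lj}$ and $f^{(p)}_{ji}[k+1]=[f^{(p)}_{ji}[k]+c^{(j)}_{ji}[k]+\overline{c}^{(i)}_{ji}[k]]_{ji}$. *)

(* Defs.v *)
From HB Require Import structures.
From mathcomp Require Import all_boot all_order all_algebra.
Set Implicit Arguments. Unset Strict Implicit. Unset Printing Implicit Defensive.
Import Order.TTheory GRing.Theory Num.Theory.
Local Open Scope ring_scope.

(* E : rel 'I_n, and  E a b  means (v_a, v_b) is an edge,
   i.e. flow goes from v_b to v_a.  So for node j:
     N_j^- = [pred i | E j i]   (j is the head of (v_j,v_i); j holds fp_{ji})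
     N_j^+ = [pred l | E l j]   (j is the tail of (v_l,v_j); j holds f_{lj}).
   Flows are int-valued: f k a b = f_{ab}[k] (held by tail b),
                         fp k a b = f^{(p)}_{ab}[k] (held by head a).
   An incident edge of node j is encoded as (true, l) for the outgoing edge
   (v_l, v_j) and (false, i) for the incoming edge (v_j, v_i). *)

Definition iedge n := (bool * 'I_n)%type.

Definition proj (R : archiRealFieldType) n (l u : 'I_n -> 'I_n -> R)
    (a b : 'I_n) (x : int) : int :=
  Num.max (Num.ceil (l a b)) (Num.min (Num.floor (u a b)) x).

Definition bal n (E : rel 'I_n) (f : 'I_n -> 'I_n -> int) (j : 'I_n) : int :=
  \sum_(i | E j i) f j i - \sum_(l | E l j) f l j.

Definition pbal n (E : rel 'I_n) (f fp : 'I_n -> 'I_n -> int) (j : 'I_n) : int :=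
  \sum_(i | E j i) fp j i - \sum_(l | E l j) f l j.

(* Step (2) of Algorithm 1: the cyclic visiting process at a node.
   cur e  = current value held by the node on edge e (f_{lj}[k] or fp_{ji}[k]),
   lim e  = floor u_{lj} (outgoing) or ceil l_{ji} (incoming),
   c      = accumulated changes c^{(j)}. *)
Definition avail n (cur lim c : iedge n -> int) (e : iedge n) : bool :=
  if e.1 then cur e + c e < lim e else lim e < cur e + c e.

Definition bump n (c : iedge n -> int) (e : iedge n) : iedge n -> int :=
  fun e' => if e' == e then c e + (if e.1 then 1 else -1) else c e'.

(* State after m visits, starting at position p0 in the cyclic order ord:
   (position of the next edge to visit, number of unit changes made, c). *)
Fixpoint visit n (d : iedge n) (ord : seq (iedge n)) (cur lim : iedge n -> int)
    (p0 : nat) (m : nat) : nat * int * (iedge n -> int) :=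
  match m with
  | 0 => (p0, 0, fun _ => 0)
  | m'.+1 =>
      let: (p, t, c) := visit d ord cur lim p0 m' in
      let e := nth d ord (p %% size ord) in
      if avail cur lim c e then (p.+1, t + 1, bump c e) else (p.+1, t, c)
  end.

Definition step2 n (d : iedge n) (ord : seq (iedge n)) (cur lim : iedge n -> int)
    (ptr : nat) (bp : int) (c : iedge n -> int) (ptr' : nat) : Prop :=
  if 0 < bp then
    exists m,
      (visit d ord cur lim ptr m).1.2 = bp /\
      (forall m', (m' < m)%N -> (visit d ord cur lim ptr m').1.2 < bp) /\
      (forall e, c e = (visit d ord cur lim ptr m).2 e) /\
      ptr' = ((visit d ord cur lim ptr m).1.1 %% size ord)%N
  else (forall e, c e = 0) /\ ptr' = ptr.

(* An execution of Algorithm 1.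
   ord j   : the cyclic order of the D_j incident edges of j,
   ptr k j : the pointer of j at step k (an index into ord j),
   cc k j e: c^{(j)}_e[k], the change computed by j at step k on incident edge e,
   tauO k t h : delay of the message sent at step k by the tail t of edge (v_h,v_t)
                to its head h,
   tauI k h t : delay of the message sent at step k by the head h of edge (v_h,v_t)
                to its tail t. *)
Definition alg1_run (R : archiRealFieldType) n (E : rel 'I_n)
    (l u : 'I_n -> 'I_n -> R) (taubar : nat)
    (ord : 'I_n -> seq (iedge n)) (ptr : nat -> 'I_n -> nat)
    (cc : nat -> 'I_n -> iedge n -> int)
    (tauO tauI : nat -> 'I_n -> 'I_n -> nat)
    (f fp : nat -> 'I_n -> 'I_n -> int) : Prop :=
  (forall j, uniq (ord j) /\
     forall e : iedge n, (e \in ord j) = (if e.1 then E e.2 j else E j e.2)) /\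
  (forall k a b, (tauO k a b <= taubar)%N /\ (tauI k a b <= taubar)%N) /\
  (forall a b, E a b -> f 0%N a b = Num.ceil (l a b) /\ fp 0%N a b = Num.ceil (l a b)) /\
  (forall k j,
     step2 (true, j) (ord j)
       (fun e => if e.1 then f k e.2 j else fp k j e.2)
       (fun e => if e.1 then Num.floor (u e.2 j) else Num.ceil (l j e.2))
       (ptr k j) (pbal E (f k) (fp k) j) (cc k j) (ptr k.+1 j)) /\
  (forall k lh j, E lh j ->
     f k.+1 lh j =
       proj l u lh j (f k lh j + cc k j (true, lh) +
         \sum_(k0 < k.+1 | (k0 + tauI k0 lh j == k)%N) cc k0 lh (false, j))) /\
  (forall k j i, E j i ->
     fp k.+1 j i =
       proj l u j i (fp k j i + cc k j (false, i) +
         \sum_(k0 < k.+1 | (k0 + tauO k0 i j == k)%N) cc k0 i (true, j))).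

(* Main.v *)
Require Import Defs.
From HB Require Import structures.
From mathcomp Require Import all_boot all_order all_algebra zify ring lra.
Import Order.TTheory GRing.Theory Num.Theory.
Set Implicit Arguments. Unset Strict Implicit.
Local Open Scope ring_scope.

Definition wt n (c : iedge n -> int) (e : iedge n) : int := if e.1 then c e else - c e.

Definition vgood n (cur lim c : iedge n -> int) (e : iedge n) : Prop :=
  if e.1 then 0 <= c e /\ (c e = 0 \/ cur e + c e <= lim e)
  else c e <= 0 /\ (c e = 0 \/ lim e <= cur e + c e).

Lemma visit_inv n d (ord : seq (iedge n)) cur lim p0 m :
  (0 < size ord)%N ->
  (visit d ord cur lim p0 m).1.2 = \sum_(e : iedge n) wt (visit d ord cur lim p0 m).2 e /\
  (forall e, ((visit d ord cur lim p0 m).2 e) != 0 -> e \in ord) /\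
  (forall e, vgood cur lim (visit d ord cur lim p0 m).2 e).
Proof.
move=> Hs; elim: m => [|m IH] /=.
  split; first by rewrite big1 // => e _; rewrite /wt; case: ifP => _; rewrite ?oppr0.
  split; first by move=> e /eqP.
  by move=> e; rewrite /vgood; case: ifP => _; split; auto.
case: (visit d ord cur lim p0 m) IH => [[p t] c] /= [Ht [Hin Hg]].
set e0 := nth d ord (p %% size ord).
have He0 : e0 \in ord by rewrite mem_nth // ltn_mod.
case: ifP => Hav /=; last by [].
split.
  rewrite Ht (bigD1 e0) //= [in RHS](bigD1 e0) //=.
  have -> : \sum_(i | i != e0) wt (Defs.bump c e0) i = \sum_(i | i != e0) wt c i.
    apply: eq_bigr => i /negbTE Hi; by rewrite /wt /Defs.bump Hi.
  rewrite /wt /Defs.bump eqxx; case: (e0.1); ring.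
split.
  move=> e; rewrite /Defs.bump; case: (e =P e0) => [-> _ //|_]; exact: Hin.
move=> e; rewrite /vgood /Defs.bump; case: (e =P e0) => [->|_]; last exact: Hg.
move: (Hg e0) Hav; rewrite /vgood /avail; case: (e0.1) => -[H1 H2] Hav; split; lia.
Qed.
Definition dlv (g : nat -> int) (tau : nat -> nat) (k0 : nat) : int :=
  \sum_(k1 < k0.+1 | (k1 + tau k1 == k0)%N) g k1.

Lemma dlv_sum g tau K :
  \sum_(k0 < K) dlv g tau k0 = \sum_(k1 < K) (if (k1 + tau k1 < K)%N then g k1 else 0).
Proof.
elim: K => [|K IH]; first by rewrite !big_ord0.
rewrite big_ord_recr /= IH /dlv [X in _ + X]big_mkcond [X in _ + X]big_ord_recr [RHS]big_ord_recr /=.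
have -> : \sum_(i < K) (if (i + tau i < K.+1)%N then g i else 0) =
          \sum_(i < K) (if (i + tau i < K)%N then g i else 0) +
          \sum_(i < K) (if (i + tau i == K)%N then g i else 0).
  rewrite -big_split /=; apply: eq_bigr => i _.
  rewrite ltnS leq_eqVlt; case: eqP => [->|_]; first by rewrite ltnn add0r.
  by case: ifP; rewrite ?addr0 ?add0r.
have -> : (K + tau K < K.+1)%N = (K + tau K == K)%N.
  by apply/idP/idP; lia.
by rewrite addrA.
Qed.

Lemma dlv_le (g : nat -> int) (tau : nat -> nat) (K : nat) : (forall k, 0 <= g k) ->
  \sum_(k0 < K) dlv g tau k0 <= \sum_(k0 < K) g k0.
Proof.
move=> Hg; rewrite dlv_sum; apply: ler_sum => i _; case: ifP => _ //.
Qed.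

Lemma dlv_ge (g : nat -> int) (tau : nat -> nat) (K : nat) : (forall k, g k <= 0) ->
  \sum_(k0 < K) g k0 <= \sum_(k0 < K) dlv g tau k0.
Proof.
move=> Hg; rewrite dlv_sum; apply: ler_sum => i _; case: ifP => _ //.
Qed.

Lemma dlv_sgn (g : nat -> int) (tau : nat -> nat) (k : nat) : (forall k, 0 <= g k) -> 0 <= dlv g tau k.
Proof. move=> Hg; apply: sumr_ge0 => i _; exact: Hg. Qed.
Lemma dlv_sgn' (g : nat -> int) (tau : nat -> nat) (k : nat) : (forall k, g k <= 0) -> dlv g tau k <= 0.
Proof. move=> Hg; rewrite /dlv; rewrite -oppr_ge0 -sumrN; apply: sumr_ge0 => i _; rewrite oppr_ge0; exact: Hg. Qed.

Lemma sum_iedge n (F : iedge n -> int) :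
  \sum_(e : iedge n) F e = \sum_l F (true, l) + \sum_i F (false, i).
Proof.
have -> : \sum_(e : iedge n) F e = \sum_(p : iedge n) (fun b i => F (b, i)) p.1 p.2.
  by apply: eq_bigr => -[b i].
by rewrite -(pair_bigA _ (fun b i => F (b, i))) big_bool.
Qed.

Lemma proj_id (R : archiRealFieldType) n (l u : 'I_n -> 'I_n -> R) a b (x : int) :
  Num.ceil (l a b) <= x -> x <= Num.floor (u a b) -> proj l u a b x = x.
Proof. by move=> H1 H2; rewrite /proj (min_r H2) (max_r H1). Qed.

Lemma proj_const (R : archiRealFieldType) n (l u : 'I_n -> 'I_n -> R) a b (x : int) :
  Num.floor (u a b) < Num.ceil (l a b) -> proj l u a b x = Num.ceil (l a b).
Proof.
move=> H; rewrite /proj; apply: max_l.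
by apply: le_trans (ltW H); rewrite ge_min lexx.
Qed.

Lemma cc_props (R : archiRealFieldType) (n : nat) (E : rel 'I_n)
    (l u : 'I_n -> 'I_n -> R) (taubar : nat)
    (ord : 'I_n -> seq (iedge n)) (ptr : nat -> 'I_n -> nat)
    (cc : nat -> 'I_n -> iedge n -> int)
    (tauO tauI : nat -> 'I_n -> 'I_n -> nat)
    (f fp : nat -> 'I_n -> 'I_n -> int) :
  alg1_run E l u taubar ord ptr cc tauO tauI f fp -> forall k j,
  (\sum_(e : iedge n) wt (cc k j) e =
     if 0 < pbal E (f k) (fp k) j then pbal E (f k) (fp k) j else 0) /\
  (~~ (0 < pbal E (f k) (fp k) j) -> forall e, cc k j e = 0) /\
  (forall e, cc k j e != 0 -> e \in ord j) /\
  (forall e, vgood (fun e => if e.1 then f k e.2 j else fp k j e.2)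
       (fun e => if e.1 then Num.floor (u e.2 j) else Num.ceil (l j e.2)) (cc k j) e).
Proof.
move=> [Hord [_ [_ [Hstep _]]]] k j.
move: (Hstep k j); rewrite /step2; case: ifP => Hbp.
  move=> [m [Hm [_ [Hc _]]]].
  have Hs : (0 < size (ord j))%N.
    case Eo: (ord j) => [|x s] //.
    move: Hbp; rewrite /pbal.
    have Hm1 : forall i, E j i = false.
      by move=> i; case: (Hord j) => _ /(_ (false, i)); rewrite Eo.
    have Hm2 : forall i, E i j = false.
      by move=> i; case: (Hord j) => _ /(_ (true, i)); rewrite Eo.
    by rewrite !big_pred0 // subrr.
  have [H1 [H2 H3]] := visit_inv (true, j)
    (fun e => if e.1 then f k e.2 j else fp k j e.2)
    (fun e => if e.1 then Num.floor (u e.2 j) else Num.ceil (l j e.2)) (ptr k j) m Hs.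
  split.
    rewrite -Hm H1; apply: eq_bigr => e _; by rewrite /wt Hc.
  split => //; split.
    by move=> e; rewrite Hc; exact: H2.
  by move=> e; move: (H3 e); rewrite /vgood !Hc.
move=> [Hc _].
split.
  by rewrite big1 // => e _; rewrite /wt Hc; case: ifP; rewrite ?oppr0.
split => //; split; first by move=> e; rewrite Hc => /eqP.
by move=> e; rewrite /vgood Hc; case: ifP; split; auto.
Qed.

Lemma cc_sgn (R : archiRealFieldType) (n : nat) (E : rel 'I_n)
    (l u : 'I_n -> 'I_n -> R) (taubar : nat)
    (ord : 'I_n -> seq (iedge n)) (ptr : nat -> 'I_n -> nat)
    (cc : nat -> 'I_n -> iedge n -> int)
    (tauO tauI : nat -> 'I_n -> 'I_n -> nat)
    (f fp : nat -> 'I_n -> 'I_n -> int) :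
  alg1_run E l u taubar ord ptr cc tauO tauI f fp -> forall k j x,
  0 <= cc k j (true, x) /\ cc k j (false, x) <= 0.
Proof.
move=> H k j x; have [_ [_ [_ H4]]] := cc_props H k j.
by move: (H4 (true, x)) (H4 (false, x)); rewrite /vgood /= => -[-> _] [-> _].
Qed.

Lemma edge_step (R : archiRealFieldType) (n : nat) (E : rel 'I_n)
    (l u : 'I_n -> 'I_n -> R) (taubar : nat)
    (ord : 'I_n -> seq (iedge n)) (ptr : nat -> 'I_n -> nat)
    (cc : nat -> 'I_n -> iedge n -> int)
    (tauO tauI : nat -> 'I_n -> 'I_n -> nat)
    (f fp : nat -> 'I_n -> 'I_n -> int) :
  alg1_run E l u taubar ord ptr cc tauO tauI f fp -> forall a b, E a b -> forall k,
  f k.+1 a b = f k a b + cc k b (true, a) +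
     dlv (fun k1 => cc k1 a (false, b)) (fun k1 => tauI k1 a b) k /\
  fp k.+1 a b = fp k a b + cc k a (false, b) +
     dlv (fun k1 => cc k1 b (true, a)) (fun k1 => tauO k1 b a) k.
Proof.
move=> H a b Eab.
have Hrun := H.
move: H => [Hord [_ [Hinit [Hstep [Hf Hfp]]]]].
set lo := Num.ceil (l a b); set hi := Num.floor (u a b).
set cO := fun k1 => cc k1 b (true, a).
set cI := fun k1 => cc k1 a (false, b).
set tI := fun k1 => tauI k1 a b.
set tO := fun k1 => tauO k1 b a.
have sO : forall k, 0 <= cO k by move=> k; case: (cc_sgn Hrun k b a).
have sI : forall k, cI k <= 0 by move=> k; case: (cc_sgn Hrun k a b).
have gO : forall k, cO k = 0 \/ f k a b + cO k <= hi.
  move=> k; have [_ [_ [_ H4]]] := cc_props Hrun k b.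
  by move: (H4 (true, a)); rewrite /vgood /= => -[_].
have gI : forall k, cI k = 0 \/ lo <= fp k a b + cI k.
  move=> k; have [_ [_ [_ H4]]] := cc_props Hrun k a.
  by move: (H4 (false, b)); rewrite /vgood /= => -[_].
case: (ltP hi lo) => Hlh.
  have Hc : forall k, f k a b = lo /\ fp k a b = lo.
    elim=> [|k IH]; first exact: Hinit.
    by rewrite (Hf _ _ _ Eab) (Hfp _ _ _ Eab) !proj_const.
  have cO0 : forall k, cO k = 0.
    move=> k; case: (gO k) => // ; rewrite (proj1 (Hc k)) => Hle.
    have := sO k; lia.
  have cI0 : forall k, cI k = 0.
    move=> k; case: (gI k) => // ; rewrite (proj2 (Hc k)) => Hle.
    have := sI k; lia.
  have d0 : forall g tau k, (forall k, g k = 0) -> dlv g tau k = 0.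
    by move=> g tau k Hg; rewrite /dlv big1 // => i _; exact: Hg.
  move=> k; rewrite !(proj1 (Hc _)) !(proj2 (Hc _)).
  move: (cO0 k) (cI0 k) (d0 cI tI k cI0) (d0 cO tO k cO0); rewrite /cO /cI => -> -> -> ->.
  by rewrite !addr0.
pose SF k := \sum_(k0 < k) (cO k0 + dlv cI tI k0).
pose SP k := \sum_(k0 < k) (cI k0 + dlv cO tO k0).
have SPF : forall k, SP k <= SF k.
  move=> k; rewrite /SP /SF !big_split /=.
  have H1 := dlv_le tO k sO; have H2 := dlv_ge tI k sI; rewrite [X in _ <= X]addrC; exact: lerD.
have Inv : forall k, f k a b = lo + SF k /\ fp k a b = lo + SP k /\ lo <= fp k a b /\ f k a b <= hi.
  elim=> [|k [IH1 [IH2 [IH3 IH4]]]].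
    rewrite /SF /SP !big_ord0 addr0; case: (Hinit a b Eab) => -> ->; split => //; split => //.
  have EF : f k a b + cO k + dlv cI tI k = lo + SF k.+1.
    by rewrite IH1 /SF big_ord_recr /=; ring.
  have EP : fp k a b + cI k + dlv cO tO k = lo + SP k.+1.
    by rewrite IH2 /SP big_ord_recr /=; ring.
  have dI := dlv_sgn' tI k sI.
  have dO := dlv_sgn tO k sO.
  have SPk := SPF k.+1.
  have A1 : lo <= fp k a b + cI k by case: (gI k) => [->|//]; rewrite addr0.
  have A2 : f k a b + cO k <= hi by case: (gO k) => [->|//]; rewrite addr0.
  have B1 : lo <= f k a b + cO k + dlv cI tI k by rewrite EF; lia.
  have B2 : f k a b + cO k + dlv cI tI k <= hi by lia.
  have B3 : lo <= fp k a b + cI k + dlv cO tO k by lia.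
  have B4 : fp k a b + cI k + dlv cO tO k <= hi by rewrite EP; lia.
  rewrite (Hf _ _ _ Eab) (Hfp _ _ _ Eab).
  rewrite (proj_id B1 B2) (proj_id B3 B4).
  split; first exact: EF.
  split; first exact: EP.
  split; lia.
move=> k; have [I1 [I2 _]] := Inv k; have [I3 [I4 _]] := Inv k.+1.
split.
  by rewrite I3 I1 /SF big_ord_recr /=; ring.
by rewrite I4 I2 /SP big_ord_recr /=; ring.
Qed.

Lemma wt_split (R : archiRealFieldType) (n : nat) (E : rel 'I_n)
    (l u : 'I_n -> 'I_n -> R) (taubar : nat)
    (ord : 'I_n -> seq (iedge n)) (ptr : nat -> 'I_n -> nat)
    (cc : nat -> 'I_n -> iedge n -> int)
    (tauO tauI : nat -> 'I_n -> 'I_n -> nat)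
    (f fp : nat -> 'I_n -> 'I_n -> int) :
  alg1_run E l u taubar ord ptr cc tauO tauI f fp -> forall k j,
  \sum_(e : iedge n) wt (cc k j) e =
  \sum_(x | E x j) cc k j (true, x) - \sum_(x | E j x) cc k j (false, x).
Proof.
move=> H k j; have [_ [_ [H3 _]]] := cc_props H k j.
have Hord := (proj1 H) j.
rewrite sum_iedge /wt /= sumrN.
have -> : \sum_i cc k j (true, i) = \sum_(x | E x j) cc k j (true, x).
  rewrite (bigID (fun x => E x j)) /= [X in _ + X]big1 ?addr0 //.
  move=> i /negbTE Hi; apply/eqP; apply: contraT => /H3.
  by rewrite (proj2 Hord) /= Hi.
have -> : \sum_i cc k j (false, i) = \sum_(x | E j x) cc k j (false, x) => //.
rewrite (bigID (fun x => E j x)) /= [X in _ + X]big1 ?addr0 //.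
move=> i /negbTE Hi; apply/eqP; apply: contraT => /H3.
by rewrite (proj2 Hord) /= Hi.
Qed.

Lemma edge_diff (R : archiRealFieldType) (n : nat) (E : rel 'I_n)
    (l u : 'I_n -> 'I_n -> R) (taubar : nat)
    (ord : 'I_n -> seq (iedge n)) (ptr : nat -> 'I_n -> nat)
    (cc : nat -> 'I_n -> iedge n -> int)
    (tauO tauI : nat -> 'I_n -> 'I_n -> nat)
    (f fp : nat -> 'I_n -> 'I_n -> int) :
  alg1_run E l u taubar ord ptr cc tauO tauI f fp -> forall a b, E a b -> forall k,
  f k a b - fp k a b =
    (\sum_(k0 < k) cc k0 b (true, a) -
     \sum_(k0 < k) dlv (fun k1 => cc k1 b (true, a)) (fun k1 => tauO k1 b a) k0) +
    (\sum_(k0 < k) dlv (fun k1 => cc k1 a (false, b)) (fun k1 => tauI k1 a b) k0 -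
     \sum_(k0 < k) cc k0 a (false, b)).
Proof.
move=> H a b Eab; elim=> [|k IH].
  rewrite !big_ord0; case: (proj1 (proj2 (proj2 H)) a b Eab) => -> ->; ring.
have [-> ->] := edge_step H Eab k.
rewrite !big_ord_recr /=.
move: IH; set A := f k a b; set B := fp k a b; move=> IH.
have -> : A = B + (A - B) by ring.
rewrite IH; ring.
Qed.

Lemma bal_step (R : archiRealFieldType) (n : nat) (E : rel 'I_n)
    (l u : 'I_n -> 'I_n -> R) (taubar : nat)
    (ord : 'I_n -> seq (iedge n)) (ptr : nat -> 'I_n -> nat)
    (cc : nat -> 'I_n -> iedge n -> int)
    (tauO tauI : nat -> 'I_n -> 'I_n -> nat)
    (f fp : nat -> 'I_n -> 'I_n -> int) :
  alg1_run E l u taubar ord ptr cc tauO tauI f fp -> forall k j,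
  bal E (f k) j + \sum_(i | E j i) dlv (fun k1 => cc k1 j (false, i)) (fun k1 => tauI k1 j i) k
    - \sum_(x | E x j) cc k j (true, x) <= bal E (f k.+1) j.
Proof.
move=> H k j; rewrite /bal.
rewrite [X in _ <= X - _](eq_bigr (fun i => f k j i + cc k i (true, j) +
   dlv (fun k1 => cc k1 j (false, i)) (fun k1 => tauI k1 j i) k)); last first.
  by move=> i Ei; rewrite (proj1 (edge_step H Ei k)).
rewrite [X in _ <= _ - X](eq_bigr (fun x => f k x j + cc k j (true, x) +
   dlv (fun k1 => cc k1 x (false, j)) (fun k1 => tauI k1 x j) k)); last first.
  by move=> i Ei; rewrite (proj1 (edge_step H Ei k)).
rewrite !big_split /=.
have P1 : 0 <= \sum_(i | E j i) cc k i (true, j).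
  by apply: sumr_ge0 => i _; case: (cc_sgn H k i j).
have P2 : \sum_(i | E i j) dlv (fun k1 => cc k1 i (false, j)) (fun k1 => tauI k1 i j) k <= 0.
  rewrite -oppr_ge0 -sumrN; apply: sumr_ge0 => i _; rewrite oppr_ge0.
  by apply: dlv_sgn' => k1; case: (cc_sgn H k1 i j).
move: P1 P2.
set S1 := \sum_(i | E j i) f k j i.
set S2 := \sum_(i | E j i) cc k i (true, j).
set S3 := \sum_(i | E j i) dlv _ _ k.
set T1 := \sum_(i | E i j) f k i j.
set T2 := \sum_(i | E i j) cc k j (true, i).
set T3 := \sum_(i | E i j) dlv _ _ k.
move=> P1 P2; lra.
Qed.

Lemma pbal_step (R : archiRealFieldType) (n : nat) (E : rel 'I_n)
    (l u : 'I_n -> 'I_n -> R) (taubar : nat)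
    (ord : 'I_n -> seq (iedge n)) (ptr : nat -> 'I_n -> nat)
    (cc : nat -> 'I_n -> iedge n -> int)
    (tauO tauI : nat -> 'I_n -> 'I_n -> nat)
    (f fp : nat -> 'I_n -> 'I_n -> int) :
  alg1_run E l u taubar ord ptr cc tauO tauI f fp -> forall k j,
  pbal E (f k) (fp k) j - \sum_(e : iedge n) wt (cc k j) e <= pbal E (f k.+1) (fp k.+1) j.
Proof.
move=> H k j; rewrite (wt_split H) /pbal.
rewrite [X in _ <= X - _](eq_bigr (fun i => fp k j i + cc k j (false, i) +
   dlv (fun k1 => cc k1 i (true, j)) (fun k1 => tauO k1 i j) k)); last first.
  by move=> i Ei; rewrite (proj2 (edge_step H Ei k)).
rewrite [X in _ <= _ - X](eq_bigr (fun x => f k x j + cc k j (true, x) +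
   dlv (fun k1 => cc k1 x (false, j)) (fun k1 => tauI k1 x j) k)); last first.
  by move=> i Ei; rewrite (proj1 (edge_step H Ei k)).
rewrite !big_split /=.
have P1 : 0 <= \sum_(i | E j i) dlv (fun k1 => cc k1 i (true, j)) (fun k1 => tauO k1 i j) k.
  by apply: sumr_ge0 => i _; apply: dlv_sgn => k1; case: (cc_sgn H k1 i j).
have P2 : \sum_(i | E i j) dlv (fun k1 => cc k1 i (false, j)) (fun k1 => tauI k1 i j) k <= 0.
  rewrite -oppr_ge0 -sumrN; apply: sumr_ge0 => i _; rewrite oppr_ge0.
  by apply: dlv_sgn' => k1; case: (cc_sgn H k1 i j).
move: P1 P2.
set S1 := \sum_(i | E j i) fp k j i.
set S2 := \sum_(i | E j i) cc k j (false, i).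
set S3 := \sum_(i | E j i) dlv _ _ k.
set T1 := \sum_(i | E i j) f k i j.
set T2 := \sum_(i | E i j) cc k j (true, i).
set T3 := \sum_(i | E i j) dlv _ _ k.
move=> P1 P2; lra.
Qed.

Lemma pbal_pers (R : archiRealFieldType) (n : nat) (E : rel 'I_n)
    (l u : 'I_n -> 'I_n -> R) (taubar : nat)
    (ord : 'I_n -> seq (iedge n)) (ptr : nat -> 'I_n -> nat)
    (cc : nat -> 'I_n -> iedge n -> int)
    (tauO tauI : nat -> 'I_n -> 'I_n -> nat)
    (f fp : nat -> 'I_n -> 'I_n -> int) :
  alg1_run E l u taubar ord ptr cc tauO tauI f fp -> forall j k1 k, (k1 <= k)%N ->
  0 <= pbal E (f k1) (fp k1) j -> 0 <= pbal E (f k) (fp k) j.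
Proof.
move=> H j k1; elim=> [|k IH].
  by rewrite leqn0 => /eqP ->.
rewrite leq_eqVlt => /orP[/eqP -> //|]; rewrite ltnS => Hk /(IH Hk) Hp.
have S := pbal_step H k j.
have [W _] := cc_props H k j.
rewrite W in S; move: S; case: ifP => _ S.
  by rewrite subrr in S.
by rewrite subr0 in S; exact: le_trans S.
Qed.

Lemma edge_key (R : archiRealFieldType) (n : nat) (E : rel 'I_n)
    (l u : 'I_n -> 'I_n -> R) (taubar : nat)
    (ord : 'I_n -> seq (iedge n)) (ptr : nat -> 'I_n -> nat)
    (cc : nat -> 'I_n -> iedge n -> int)
    (tauO tauI : nat -> 'I_n -> 'I_n -> nat)
    (f fp : nat -> 'I_n -> 'I_n -> int) :
  alg1_run E l u taubar ord ptr cc tauO tauI f fp -> forall a b, E a b -> forall k,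
  cc k a (false, b) <= f k a b - fp k a b +
     dlv (fun k1 => cc k1 a (false, b)) (fun k1 => tauI k1 a b) k.
Proof.
move=> H a b Eab k; rewrite (edge_diff H Eab k).
have H1 := dlv_le (fun k1 => tauO k1 b a) k (fun k1 => proj1 (cc_sgn H k1 b a)).
have H2 := dlv_ge (fun k1 => tauI k1 a b) k.+1 (fun k1 => proj2 (cc_sgn H k1 a b)).
rewrite !big_ord_recr /= in H2.
move: H1 H2.
set A := \sum_(i < k) cc i b (true, a).
set B := \sum_(i < k) dlv _ _ i.
set C := \sum_(i < k) cc i a (false, b).
set D := \sum_(i < k) dlv (fun k1 => cc k1 a (false, b)) _ i.
set x := dlv _ _ k.
move=> H1 H2; lra.
Qed.

Theorem proposition2 (R : archiRealFieldType) (n : nat) (E : rel 'I_n)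
    (l u : 'I_n -> 'I_n -> R) (taubar : nat)
    (ord : 'I_n -> seq (iedge n)) (ptr : nat -> 'I_n -> nat)
    (cc : nat -> 'I_n -> iedge n -> int)
    (tauO tauI : nat -> 'I_n -> 'I_n -> nat)
    (f fp : nat -> 'I_n -> 'I_n -> int) :
  (2 <= n)%N ->
  (forall a, ~~ E a a) ->
  (forall a b, connect E a b) ->
  (forall a b, E a b -> 1 <= l a b /\ l a b <= u a b) ->
  alg1_run E l u taubar ord ptr cc tauO tauI f fp ->
  forall (k : nat) (j : 'I_n),
    bal E (f k.+1) j < 0 -> bal E (f k) j < 0.
Proof.
move=> _ _ _ _ H k j Hneg; rewrite ltNge; apply/negP => Hk.
move: Hneg; rewrite ltNge => /negP; apply.
have bs := bal_step H k j.
case: (ltP (pbal E (f k) (fp k) j) 0) => Hbp.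
  have Z : forall k1, (k1 <= k)%N -> forall e, cc k1 j e = 0.
    move=> k1 Hk1 e; have [_ [Z _]] := cc_props H k1 j; apply: Z.
    apply/negP => Hp.
    by move: (pbal_pers H Hk1 (ltW Hp)); rewrite leNgt Hbp.
  have Z1 : \sum_(x | E x j) cc k j (true, x) = 0 by rewrite big1 // => x _; exact: Z.
  have Z2 : \sum_(i | E j i) dlv (fun k1 => cc k1 j (false, i)) (fun k1 => tauI k1 j i) k = 0.
    rewrite big1 // => i _; rewrite /dlv big1 // => k1 _; apply: Z.
    by rewrite -ltnS ltn_ord.
  rewrite Z1 Z2 in bs.
  by rewrite addr0 subr0 in bs; exact: le_trans Hk bs.
have [W _] := cc_props H k j.
rewrite (wt_split H) in W.
have E0 : (if 0 < pbal E (f k) (fp k) j then pbal E (f k) (fp k) j else 0) =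
   pbal E (f k) (fp k) j.
  by case: ifP => // /negbT; rewrite -leNgt => H0; apply/eqP; rewrite eq_le H0 Hbp.
rewrite E0 in W.
have D : bal E (f k) j - pbal E (f k) (fp k) j = \sum_(i | E j i) (f k j i - fp k j i).
  by rewrite /bal /pbal sumrB; ring.
have K : \sum_(i | E j i) cc k j (false, i) <=
   \sum_(i | E j i) (f k j i - fp k j i) +
   \sum_(i | E j i) dlv (fun k1 => cc k1 j (false, i)) (fun k1 => tauI k1 j i) k.
  rewrite -big_split /=; apply: ler_sum => i Ei; have := edge_key H Ei k; exact.
move: bs W D K.
set B0 := bal E (f k) j. set B1 := bal E (f k.+1) j. set P := pbal E (f k) (fp k) j.
set X1 := \sum_(i | E j i) dlv _ _ k.
set X2 := \sum_(x | E x j) cc k j (true, x).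
set X3 := \sum_(x | E j x) cc k j (false, x).
set X4 := \sum_(i | E j i) (f k j i - fp k j i).
move=> bs W D K; lra.
Qed.
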